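(* Let $\kappa$ be an infinite cardinal. If a graph $G$ is $\kappa$-connected, then $G$ contains a subdivision of $K_\kappa$.
   Context: A graph is a pair $(V,E)$ with $E\subseteq[V]^2$. A graph is $\kappa$-connected if it stays connected after removing any set of fewer than $\kappa$ vertices. $K_\kappa$ is the complete graph on $\kappa$ vertices. A graph $H$ is a subdivision of $K$ if $H$ is obtained from $K$ by replacing edges with paths (internally disjoint paths whose interior vertices are new); $G$ contains a subdivision of $K_\kappa$ if some subgraph of $G$ is such a subdivision. *)

(* Defs.v *)
(* graphs on an arbitrary (possibly infinite) vertex type,
   cardinals represented by types, cardinal comparison by injections. *)
From Stdlib Require Import List.
Import ListNotations.

Record graph := Graph {
  vert :> Type;
  adj : vert -> vert -> Prop;
  adj_sym : forall x y, adj x y -> adj y x;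
  adj_irrefl : forall x, ~ adj x x
}.

Definition injective {A B : Type} (f : A -> B) : Prop :=
  forall x y, f x = f y -> x = y.

Definition card_le (A B : Type) : Prop := exists f : A -> B, injective f.
Definition card_lt (A B : Type) : Prop := card_le A B /\ ~ card_le B A.

Definition infinite_card (K : Type) : Prop := card_le nat K.

Fixpoint walk {V : Type} (e : V -> V -> Prop) (l : list V) : Prop :=
  match l with
  | x :: ((y :: _) as t) => e x y /\ walk e t
  | _ => True
  end.

Definition is_path {V : Type} (e : V -> V -> Prop) (l : list V) (x y : V) : Prop :=
  (exists t, l = x :: t) /\ last l x = y /\ walk e l /\ NoDup l.

Definition interior {V : Type} (l : list V) : list V := removelast (tl l).

Definition connected_minus (G : graph) (S : G -> Prop) : Prop :=
  (exists v : G, ~ S v) /\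
  forall u v : G, ~ S u -> ~ S v ->
    exists l, is_path (adj G) l u v /\ forall w, In w l -> ~ S w.

Definition k_connected (G : graph) (K : Type) : Prop :=
  forall S : G -> Prop, card_lt {x : G | S x} K -> connected_minus G S.

Definition has_TK (G : graph) (K : Type) : Prop :=
  exists (b : K -> G) (P : K -> K -> list G),
    injective b /\
    (forall i j, i <> j ->
       is_path (adj G) (P i j) (b i) (b j) /\
       forall k, ~ In (b k) (interior (P i j))) /\
    (forall i j k l, i <> j -> k <> l ->
       ~ ((i = k /\ j = l) \/ (i = l /\ j = k)) ->
       forall x, In x (interior (P i j)) -> ~ In x (interior (P k l))).

(* Main.v *)
Require Import Defs.
From Stdlib Require Import List Classical ClassicalEpsilon Lia Cantor ProofIrrelevance PeanoNat.
From mathcomp Require ssreflect boolp classical_sets.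
Import ListNotations.
Module ZornW.
Import ssreflect boolp classical_sets.
Local Open Scope classical_set_scope.
Lemma zorn_max (T:Type) (P : (T->Prop) -> Prop) :
  (forall F : (T->Prop)->Prop, (forall X, F X -> P X) ->
     (forall X Y, F X -> F Y -> (forall a, X a -> Y a) \/ (forall a, Y a -> X a)) ->
     P (fun a => exists X, F X /\ X a)) ->
  exists M, P M /\ forall N, (forall a, M a -> N a) -> P N -> forall a, N a -> M a.
Proof.
move=> H.
have [M [PM HM]] : exists A, P A /\ forall B, A `<` B -> ~ P B.
  apply: Zorn_bigcup => F FP Ftot.
  have := H F FP Ftot.
  have -> : (fun a => exists X, F X /\ X a) = \bigcup_(X in F) X.
    by apply: funext => a; apply: propext; split => [[X [FX Xa]]|[X FX Xa]]; exists X.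
  done.
exists M; split => // N MN PN a Na.
apply: NNPP => nMa.
apply: (HM N) => //; split => //.
by move=> /(_ a Na).
Qed.
End ZornW.


Lemma chain2 {T} (F : (T->Prop)->Prop)
  (Ftot : forall X Y, F X -> F Y -> (forall a, X a -> Y a) \/ (forall a, Y a -> X a)) a b :
  (exists X, F X /\ X a) -> (exists X, F X /\ X b) -> exists X, F X /\ X a /\ X b.
Proof.
  intros [X [FX Xa]] [Y [FY Yb]].
  destruct (Ftot X Y FX FY) as [H|H]; [exists Y|exists X]; auto.
Qed.

Lemma comparable (Y Z : Type) : card_le Y Z \/ card_le Z Y.
Proof.
  set (P := fun M : Y * Z -> Prop =>
    (forall y z z', M (y,z) -> M (y,z') -> z = z') /\
    (forall y y' z, M (y,z) -> M (y',z) -> y = y')).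
  destruct (ZornW.zorn_max (Y*Z) P) as [M [[M1 M2] HM]].
  - intros F FP Ftot. split.
    + intros y z z' H1 H2. destruct (chain2 F Ftot _ _ H1 H2) as [X [FX [X1 X2]]].
      exact (proj1 (FP X FX) _ _ _ X1 X2).
    + intros y y' z H1 H2. destruct (chain2 F Ftot _ _ H1 H2) as [X [FX [X1 X2]]].
      exact (proj2 (FP X FX) _ _ _ X1 X2).
  - destruct (classic (forall y, exists z, M (y,z))) as [Hy|Hy].
    + left. exists (fun y => proj1_sig (constructive_indefinite_description _ (Hy y))).
      intros a b E.
      destruct (constructive_indefinite_description _ (Hy a)) as [za Ha].
      destruct (constructive_indefinite_description _ (Hy b)) as [zb Hb].
      simpl in E; subst. eauto.
    + destruct (classic (forall z, exists y, M (y,z))) as [Hz|Hz].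
      * right. exists (fun z => proj1_sig (constructive_indefinite_description _ (Hz z))).
        intros a b E.
        destruct (constructive_indefinite_description _ (Hz a)) as [ya Ha].
        destruct (constructive_indefinite_description _ (Hz b)) as [yb Hb].
        simpl in E; subst. eauto.
      * exfalso. apply not_all_ex_not in Hy as [y0 Hy0].
        apply not_all_ex_not in Hz as [z0 Hz0].
        set (N := fun p : Y * Z => M p \/ p = (y0,z0)).
        assert (HN : P N).
        { split.
          - intros y z z' [H1|H1] [H2|H2].
            + eauto.
            + injection H2; intros; subst. exfalso; eauto.
            + injection H1; intros; subst. exfalso; eauto.
            + congruence.
          - intros y y' z [H1|H1] [H2|H2].
            + eauto.
            + injection H2; intros; subst. exfalso; eauto.
            + injection H1; intros; subst. exfalso; eauto.
            + congruence. }
        assert (M (y0,z0)) by (apply (HM N); unfold N; auto).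
        eauto.
Qed.


Section Hess.
Variable X : Type.
Variable e : nat -> X.
Hypothesis e_inj : injective e.

Definition supp (F : (X*X)*X -> Prop) x :=
  exists p z, F (p,z) /\ (x = fst p \/ x = snd p \/ x = z).

Definition PH (F : (X*X)*X -> Prop) :=
  (forall p z z', F (p,z) -> F (p,z') -> z = z') /\
  (forall p p' z, F (p,z) -> F (p',z) -> p = p') /\
  (forall x y, supp F x -> supp F y -> exists z, F ((x,y),z)) /\
  ((exists q, F q) -> forall n, supp F (e n)).

Definition F0 (q : (X*X)*X) : Prop :=
  exists m n, q = ((e m, e n), e (Cantor.to_nat (m,n))).

Lemma to_nat_inj p q : Cantor.to_nat p = Cantor.to_nat q -> p = q.
Proof. intro H. rewrite <- (Cantor.cancel_of_to p), <- (Cantor.cancel_of_to q). congruence. Qed.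

Lemma supp_F0 x : supp F0 x -> exists k, x = e k.
Proof.
  intros [p [z [[m [n E]] H]]]. injection E; intros; subst.
  destruct H as [H|[H|H]]; simpl in H; eauto.
Qed.

Lemma PH_F0 : PH F0.
Proof.
  split; [|split; [|split]].
  - intros p z z' [m [n E]] [m' [n' E']].
    injection E as E1 E2. injection E' as E3 E4. subst p.
    injection E3 as E5 E6. apply e_inj in E5. apply e_inj in E6. subst. reflexivity.
  - intros p p' z [m [n E]] [m' [n' E']].
    injection E as E1 E2. injection E' as E3 E4. subst.
    apply e_inj in E4. apply (to_nat_inj (m,n) (m',n')) in E4. injection E4 as -> ->. reflexivity.
  - intros x y Hx Hy. destruct (supp_F0 x Hx) as [a ->]. destruct (supp_F0 y Hy) as [b ->].
    exists (e (Cantor.to_nat (a,b))). exists a, b. reflexivity.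
  - intros _ n. exists (e n, e n), (e (Cantor.to_nat (n,n))). split.
    + exists n, n. reflexivity.
    + left. reflexivity.
Qed.

Lemma PH_chain : forall F : ((X*X)*X -> Prop)->Prop, (forall Y, F Y -> PH Y) ->
     (forall Y Z, F Y -> F Z -> (forall a, Y a -> Z a) \/ (forall a, Z a -> Y a)) ->
     PH (fun a => exists Y, F Y /\ Y a).
Proof.
  intros F FP Ftot.
  assert (Hs : forall x, supp (fun a => exists Y, F Y /\ Y a) x ->
                 exists q, (exists Y, F Y /\ Y q) /\ forall Y, Y q -> supp Y x).
  { intros x [p [z [H1 H2]]]. exists (p,z). split; auto. intros Y Yq. exists p, z. auto. }
  split; [|split; [|split]].
  - intros p z z' H1 H2. destruct (chain2 F Ftot _ _ H1 H2) as [Y [FY [Y1 Y2]]].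
    exact (proj1 (FP Y FY) _ _ _ Y1 Y2).
  - intros p p' z H1 H2. destruct (chain2 F Ftot _ _ H1 H2) as [Y [FY [Y1 Y2]]].
    exact (proj1 (proj2 (FP Y FY)) _ _ _ Y1 Y2).
  - intros x y Hx Hy. apply Hs in Hx as [q1 [Hq1 S1]]. apply Hs in Hy as [q2 [Hq2 S2]].
    destruct (chain2 F Ftot _ _ Hq1 Hq2) as [Y [FY [Y1 Y2]]].
    destruct (proj1 (proj2 (proj2 (FP Y FY))) x y (S1 Y Y1) (S2 Y Y2)) as [z Hz].
    exists z. exists Y. auto.
  - intros [q [Y [FY Yq]]] n.
    destruct (proj2 (proj2 (proj2 (FP Y FY))) (ex_intro _ q Yq) n) as [p [z [H1 H2]]].
    exists p, z. split; auto. exists Y; auto.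
Qed.

Ltac hcases :=
  try subst;
  repeat match goal with
  | F : ?h ?a = ?h ?b, hinj : forall x y, ?B x -> ?B y -> ?h x = ?h y -> x = y |- _ =>
      apply hinj in F; [subst | assumption | assumption]
  end;
  try reflexivity;
  exfalso;
  match goal with
  | hB : forall x, ?B x -> ~ ?B (?h x), Ba : ?B (?h ?b), Bb : ?B ?b |- _ =>
      exact (hB b Bb Ba)
  | F : ?a = ?h ?b, Ba : ?B ?a, Bb : ?B ?b, hB : forall x, ?B x -> ~ ?B (?h x) |- _ =>
      apply (hB b Bb); rewrite <- F; exact Ba
  | F : ?h ?b = ?a, Ba : ?B ?a, Bb : ?B ?b, hB : forall x, ?B x -> ~ ?B (?h x) |- _ =>
      apply (hB b Bb); rewrite F; exact Ba
  end.

Lemma hessenberg_aux : card_le (X*X) X.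
Proof.
  destruct (ZornW.zorn_max _ PH PH_chain) as [M [PM HM]].
  destruct PM as [M1 [M2 [M3 M4]]].
  assert (Mne : exists q, M q).
  { apply NNPP. intro Hn.
    assert (HM0 : M ((e 0, e 0), e (Cantor.to_nat (0,0)))).
    { apply (HM F0 (fun a Ma => False_ind _ (Hn (ex_intro _ a Ma))) PH_F0).
      exists 0, 0. reflexivity. }
    apply Hn. eexists. exact HM0. }
  set (B := supp M).
  assert (Be : forall n, B (e n)) by (apply M4; exact Mne).
  set (fM := fun x y => epsilon (inhabits (e 0)) (fun z => M ((x,y),z))).
  assert (fM_spec : forall x y, B x -> B y -> M ((x,y), fM x y)).
  { intros x y Bx By. unfold fM. apply epsilon_spec. apply M3; auto. }
  assert (MB : forall x y z, M ((x,y),z) -> B x /\ B y /\ B z).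
  { intros x y z H. split; [|split]; exists (x,y), z; simpl; auto. }
  assert (fM_B : forall x y, B x -> B y -> B (fM x y)).
  { intros x y Bx By. apply (MB x y). auto. }
  assert (fM_inj : forall x y x' y', B x -> B y -> B x' -> B y' -> fM x y = fM x' y' -> x = x' /\ y = y').
  { intros x y x' y' Bx By Bx' By' E.
    pose proof (fM_spec x y Bx By) as S1. pose proof (fM_spec x' y' Bx' By') as S2.
    rewrite E in S1. pose proof (M2 _ _ _ S1 S2) as E2. injection E2; auto. }
  assert (noh : ~ exists h : X -> X, (forall x y, B x -> B y -> h x = h y -> x = y) /\
                                     (forall x, B x -> ~ B (h x))).
  { intros [h [hinj hB]].
    set (New := fun q : (X*X)*X => exists x0 y0 c, B x0 /\ B y0 /\
       ((fst (fst q) = x0 /\ snd (fst q) = h y0 /\ c = e 0) \/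
        (fst (fst q) = h x0 /\ snd (fst q) = y0 /\ c = e 1) \/
        (fst (fst q) = h x0 /\ snd (fst q) = h y0 /\ c = e 2)) /\
       snd q = h (fM (fM x0 y0) c)).
    set (N := fun q => M q \/ New q).
    assert (suppN : forall x, supp N x -> B x \/ exists x0, B x0 /\ x = h x0).
    { intros x [[a b] [z [[Hq|Hq] Hx]]]; simpl in Hx.
      - destruct (MB _ _ _ Hq) as [Ba [Bb Bz]]. left. destruct Hx as [->|[->| ->]]; auto.
      - destruct Hq as [x0 [y0 [c [Bx0 [By0 [Hc Hz]]]]]]; simpl in *.
        assert (Bc : B c) by (destruct Hc as [[_ [_ ->]]|[[_ [_ ->]]|[_ [_ ->]]]]; auto).
        destruct Hx as [->|[->| ->]].
        + destruct Hc as [[-> _]|[[-> _]|[-> _]]]; eauto.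
        + destruct Hc as [[_ [-> _]]|[[_ [-> _]]|[_ [-> _]]]]; eauto.
        + right. exists (fM (fM x0 y0) c). split; auto. }
    assert (cdist : e 0 <> e 1 /\ e 0 <> e 2 /\ e 1 <> e 2).
    { split; [|split]; intro E; apply e_inj in E; discriminate. }
    assert (PN : PH N).
    { split; [|split; [|split]].
      - intros [x y] z z' [H1|H1] [H2|H2].
        + eauto.
        + exfalso. destruct (MB _ _ _ H1) as [Bx [By _]].
          destruct H2 as [x0 [y0 [c [Bx0 [By0 [Hc _]]]]]]; simpl in Hc.
          destruct Hc as [[_ [-> _]]|[[-> _]|[-> _]]];
            first [exact (hB _ By0 By) | exact (hB _ Bx0 Bx)].
        + exfalso. destruct (MB _ _ _ H2) as [Bx [By _]].
          destruct H1 as [x0 [y0 [c [Bx0 [By0 [Hc _]]]]]]; simpl in Hc.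
          destruct Hc as [[_ [-> _]]|[[-> _]|[-> _]]];
            first [exact (hB _ By0 By) | exact (hB _ Bx0 Bx)].
        + destruct H1 as [x0 [y0 [c [Bx0 [By0 [Hc Hz]]]]]];
          destruct H2 as [x1 [y1 [c1 [Bx1 [By1 [Hc1 Hz1]]]]]]; simpl in *; subst z z'.
          destruct Hc as [[E1 [E2 E3]]|[[E1 [E2 E3]]|[E1 [E2 E3]]]];
          destruct Hc1 as [[F1 [F2 F3]]|[[F1 [F2 F3]]|[F1 [F2 F3]]]]; subst c c1 x y;
          hcases.
      - intros [x y] [x' y'] z [H1|H1] [H2|H2].
        + eauto.
        + exfalso. destruct (MB _ _ _ H1) as [_ [_ Bz]].
          destruct H2 as [x0 [y0 [c [Bx0 [By0 [Hc Hz]]]]]]; simpl in Hc, Hz.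
          assert (Bc : B c) by (destruct Hc as [[_ [_ ->]]|[[_ [_ ->]]|[_ [_ ->]]]]; auto).
          subst z. exact (hB _ (fM_B _ _ (fM_B _ _ Bx0 By0) Bc) Bz).
        + exfalso. destruct (MB _ _ _ H2) as [_ [_ Bz]].
          destruct H1 as [x0 [y0 [c [Bx0 [By0 [Hc Hz]]]]]]; simpl in Hc, Hz.
          assert (Bc : B c) by (destruct Hc as [[_ [_ ->]]|[[_ [_ ->]]|[_ [_ ->]]]]; auto).
          subst z. exact (hB _ (fM_B _ _ (fM_B _ _ Bx0 By0) Bc) Bz).
        + destruct H1 as [x0 [y0 [c [Bx0 [By0 [Hc Hz]]]]]];
          destruct H2 as [x1 [y1 [c1 [Bx1 [By1 [Hc1 Hz1]]]]]]; simpl in *.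
          assert (Bc : B c) by (destruct Hc as [[_ [_ ->]]|[[_ [_ ->]]|[_ [_ ->]]]]; auto).
          assert (Bc1 : B c1) by (destruct Hc1 as [[_ [_ ->]]|[[_ [_ ->]]|[_ [_ ->]]]]; auto).
          rewrite Hz in Hz1. apply hinj in Hz1; [|auto|auto].
          apply fM_inj in Hz1; auto. destruct Hz1 as [Hz1 ->].
          apply fM_inj in Hz1; auto. destruct Hz1 as [-> ->].
          destruct cdist as [d1 [d2 d3]].
          destruct Hc as [[E1 [E2 E3]]|[[E1 [E2 E3]]|[E1 [E2 E3]]]];
          destruct Hc1 as [[F1 [F2 F3]]|[[F1 [F2 F3]]|[F1 [F2 F3]]]]; subst;
          try reflexivity; exfalso; auto.
      - intros x y Hx Hy. apply suppN in Hx. apply suppN in Hy.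
        destruct Hx as [Bx|[x0 [Bx0 ->]]]; destruct Hy as [By|[y0 [By0 ->]]].
        + destruct (M3 x y Bx By) as [z Hz]. exists z. left. exact Hz.
        + eexists. right. exists x, y0, (e 0). simpl. split; [|split; [|split]]; eauto.
        + eexists. right. exists x0, y, (e 1). simpl. split; [|split; [|split]]; eauto.
        + eexists. right. exists x0, y0, (e 2). simpl. split; [|split; [|split]]; eauto.
      - intros _ n. destruct (Be n) as [p [z [H1 H2]]]. exists p, z. split; auto. left; auto. }
    assert (HN : M ((h (e 0), h (e 0)), h (fM (fM (e 0) (e 0)) (e 2)))).
    { apply (HM N (fun a Ma => or_introl Ma) PN). right.
      exists (e 0), (e 0), (e 2). simpl. split; [|split; [|split]]; auto. }
    destruct (MB _ _ _ HN) as [Bh _]. exact (hB _ (Be 0) Bh). }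
  destruct (comparable {x | B x} {x | ~ B x}) as [[j jinj]|[g ginj]].
  - exfalso. apply noh.
    exists (fun x => match excluded_middle_informative (B x) with
                     | left p => proj1_sig (j (exist _ x p)) | right _ => x end).
    split.
    + intros x y Bx By.
      destruct (excluded_middle_informative (B x)) as [px|]; [|contradiction].
      destruct (excluded_middle_informative (B y)) as [py|]; [|contradiction].
      intro E. apply eq_sig_hprop in E; [|intros; apply proof_irrelevance].
      apply jinj in E. exact (f_equal (@proj1_sig _ _) E).
    + intros x Bx.
      destruct (excluded_middle_informative (B x)) as [px|]; [|contradiction].
      exact (proj2_sig (j (exist _ x px))).
  - set (iota := fun x => match excluded_middle_informative (B x) with
                     | left p => fM x (e 0)
                     | right np => fM (proj1_sig (g (exist _ x np))) (e 1) end).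
    assert (iB : forall x, B (iota x)).
    { intro x. unfold iota. destruct (excluded_middle_informative (B x)) as [px|px].
      - apply fM_B; auto.
      - apply fM_B; auto. exact (proj2_sig (g (exist _ x px))). }
    assert (iinj : injective iota).
    { intros x y. unfold iota.
      destruct (excluded_middle_informative (B x)) as [px|px];
      destruct (excluded_middle_informative (B y)) as [py|py]; intro E;
      apply fM_inj in E; auto; try (exact (proj2_sig (g (exist _ _ _)))).
      - tauto.
      - destruct E as [_ E]. apply e_inj in E. discriminate.
      - destruct E as [_ E]. apply e_inj in E. discriminate.
      - destruct E as [E _]. apply eq_sig_hprop in E; [|intros; apply proof_irrelevance].
        apply ginj in E. exact (f_equal (@proj1_sig _ _) E). }
    exists (fun p => fM (iota (fst p)) (iota (snd p))).
    intros [x y] [x' y'] E. simpl in E. apply fM_inj in E; auto.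
    destruct E as [E1 E2]. apply iinj in E1. apply iinj in E2. subst. reflexivity.
Qed.
End Hess.

Lemma hessenberg (X : Type) : card_le nat X -> card_le (X*X) X.
Proof. intros [e He]. exact (hessenberg_aux X e He). Qed.



Lemma NoDup_map_inj {U V} (f : U -> V) l : injective f -> NoDup l -> NoDup (map f l).
Proof.
  intros Hf Hl. induction Hl; simpl; constructor; auto.
  intro Hin. apply in_map_iff in Hin as [y [E Hy]]. apply Hf in E. subst. auto.
Qed.

Lemma LN {V} (f : nat -> V) (L : list V) : injective f -> (forall n, In (f n) L) -> False.
Proof.
  intros Hf HL.
  assert (H := @NoDup_incl_length _ _ L (NoDup_map_inj f _ Hf (seq_NoDup (S (length L)) 0))).
  assert (length (map f (seq 0 (S (length L)))) <= length L).
  { apply H. intros x Hx. apply in_map_iff in Hx as [n [<- _]]. apply HL. }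
  rewrite length_map, length_seq in H0. lia.
Qed.

Fixpoint glist {Y} (pick : list Y -> Y) (n : nat) : list Y :=
  match n with 0 => [] | S n => pick (glist pick n) :: glist pick n end.

Lemma glist_mono {Y} (pick : list Y -> Y) m n : m < n -> In (pick (glist pick m)) (glist pick n).
Proof.
  induction n; intro H; [lia|]. simpl. destruct (Nat.eq_dec m n) as [->|]; [left; auto|].
  right. apply IHn. lia.
Qed.

Lemma NL (Y : Type) : ~ card_le nat Y -> exists l : list Y, forall y, In y l.
Proof.
  intro H. apply NNPP. intro H'.
  assert (H2 : forall l : list Y, exists y, ~ In y l).
  { intro l. apply NNPP. intro H3. apply H'. exists l. intro y. apply NNPP. intro H4. apply H3. eauto. }
  set (pick := fun l => proj1_sig (constructive_indefinite_description _ (H2 l))).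
  assert (Hp : forall l, ~ In (pick l) l).
  { intro l. unfold pick. exact (proj2_sig (constructive_indefinite_description _ (H2 l))). }
  apply H. exists (fun n => pick (glist pick n)).
  intros m n E. destruct (Nat.lt_total m n) as [Hl|[Hl|Hl]]; auto.
  - exfalso. apply (Hp (glist pick n)). rewrite <- E. apply glist_mono; auto.
  - exfalso. apply (Hp (glist pick m)). rewrite E. apply glist_mono; auto.
Qed.

Lemma small_union (K V : Type) (HK : card_le nat K) (A : K -> Prop)
  (HA : ~ card_le K {k | A k}) (F : K -> K -> list V) :
  ~ card_le K {x : V | exists i j, A i /\ A j /\ In x (F i j)}.
Proof.
  intros [g ginj].
  destruct (classic (card_le nat {k | A k})) as [HN|HN].
  - destruct (hessenberg _ HN) as [m minj]. destruct HN as [e einj].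
    apply HA.
    assert (Hc : forall x : {x : V | exists i j, A i /\ A j /\ In x (F i j)},
      exists t : {k | A k} * {k | A k} * nat,
        nth_error (F (proj1_sig (fst (fst t))) (proj1_sig (snd (fst t)))) (snd t) = Some (proj1_sig x)).
    { intros [x Hx0]. simpl. destruct Hx0 as [i [j [Ai [Aj Hx]]]]. apply In_nth_error in Hx as [n Hn].
      exists (exist _ i Ai, exist _ j Aj, n). exact Hn. }
    set (phi := fun x => proj1_sig (constructive_indefinite_description _ (Hc x))).
    assert (phinj : injective phi).
    { intros x y E.
      assert (phis : forall x, nth_error (F (proj1_sig (fst (fst (phi x)))) (proj1_sig (snd (fst (phi x))))) (snd (phi x)) = Some (proj1_sig x))
        by (intro z; unfold phi; exact (proj2_sig (constructive_indefinite_description _ (Hc z)))).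
      assert (Sx := phis x). assert (Sy := phis y). rewrite E in Sx. rewrite Sx in Sy.
      injection Sy as Sy. apply eq_sig_hprop; [intros; apply proof_irrelevance|auto]. }
    exists (fun k => let t := phi (g k) in m (m (fst (fst t), snd (fst t)), e (snd t))).
    intros k k' E. simpl in E. apply minj in E. injection E as E1 E2.
    apply minj in E1. injection E1 as E3 E4. apply einj in E2.
    apply ginj, phinj. destruct (phi (g k)) as [[? ?] ?], (phi (g k')) as [[? ?] ?].
    simpl in *. subst. reflexivity.
  - destruct (NL _ HN) as [ly Hly].
    destruct HK as [e einj].
    set (L := flat_map (fun i => flat_map (fun j => F (proj1_sig i) (proj1_sig j)) ly) ly).
    apply (LN (fun n => proj1_sig (g (e n))) L).
    + intros a b E. apply einj, ginj. apply eq_sig_hprop; [intros; apply proof_irrelevance|auto].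
    + intro n. destruct (g (e n)) as [x [i [j [Ai [Aj Hx]]]]]. simpl.
      unfold L. apply in_flat_map. exists (exist _ i Ai). split; auto.
      apply in_flat_map. exists (exist _ j Aj). split; auto.
Qed.


Lemma lt_of_not_ge (X K : Type) : ~ card_le K X -> card_lt X K.
Proof. intro H. split; auto. destruct (comparable X K); tauto. Qed.


Lemma in_removelast {V} (l : list V) z : In z (removelast l) -> In z l.
Proof.
  induction l as [|a l IH]; simpl; auto.
  destruct l; simpl in *; [tauto|]. intros [H|H]; auto.
Qed.

Lemma interior_in {V} (l : list V) z : In z (interior l) -> In z l.
Proof. unfold interior. destruct l; simpl; auto. intro H. right. apply in_removelast; auto. Qed.

Lemma removelast_snoc {V} (l : list V) a : removelast (l ++ [a]) = l.
Proof. induction l; simpl; auto. rewrite IHl. destruct l; reflexivity. Qed.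

Lemma last_snoc {V} (l : list V) a d : last (l ++ [a]) d = a.
Proof. induction l; simpl; auto. rewrite IHl. destruct l; reflexivity. Qed.

Lemma snoc_decomp {V} (l : list V) : l = [] \/ exists l' a, l = l' ++ [a].
Proof.
  induction l as [|x l IH]; auto. right. destruct IH as [->|[l' [a ->]]].
  - exists [], x. reflexivity.
  - exists (x :: l'), a. reflexivity.
Qed.

Lemma interior_not_end {V} (e : V -> V -> Prop) l x y z :
  is_path e l x y -> In z (interior l) -> z <> x /\ z <> y.
Proof.
  intros [[t ->] [Hl [_ Hnd]]] Hz. unfold interior in Hz. simpl in Hz.
  apply NoDup_cons_iff in Hnd as [Hx Hnd'].
  destruct (snoc_decomp t) as [->|[t' [a ->]]]; [simpl in Hz; tauto|].
  rewrite removelast_snoc in Hz.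
  replace (last (x :: t' ++ [a]) x) with a in Hl
    by (change (x :: t' ++ [a]) with ((x :: t') ++ [a]); rewrite last_snoc; reflexivity).
  subst y. split.
  - intro E; subst. apply Hx. apply in_or_app; auto.
  - intro E; subst. apply NoDup_remove_2 with (l' := []) in Hnd'. rewrite app_nil_r in Hnd'. auto.
Qed.

Lemma interior_rev {V} (l : list V) : interior (rev l) = rev (interior l).
Proof.
  destruct l as [|x t]; [reflexivity|].
  destruct (snoc_decomp t) as [->|[t' [a ->]]]; [reflexivity|].
  unfold interior. simpl. rewrite removelast_snoc. rewrite rev_app_distr. simpl.
  rewrite removelast_snoc. reflexivity.
Qed.

Lemma in_interior_rev {V} (l : list V) z : In z (interior (rev l)) <-> In z (interior l).
Proof. rewrite interior_rev. rewrite <- in_rev. tauto. Qed.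

Lemma walk_snoc {V} (e : V -> V -> Prop) l a :
  walk e l -> (l = [] \/ e (last l a) a) -> walk e (l ++ [a]).
Proof.
  induction l as [|x l IH]; simpl; auto.
  intros Hw Hl. destruct l as [|y l].
  - simpl. destruct Hl as [Hl|Hl]; [discriminate|]. simpl in Hl. auto.
  - destruct Hw as [Hxy Hw]. simpl. split; auto.
    apply IH; auto. destruct Hl as [Hl|Hl]; [discriminate|]. right. exact Hl.
Qed.

Lemma last_rev_cons {V} (l : list V) x d : last (rev l ++ [x]) d = x.
Proof. apply last_snoc. Qed.

Lemma walk_rev {V} (e : V -> V -> Prop) (He : forall x y, e x y -> e y x) l :
  walk e l -> walk e (rev l).
Proof.
  induction l as [|x l IH]; simpl; auto.
  intro Hw. apply walk_snoc.
  - apply IH. destruct l; simpl in *; tauto.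
  - destruct l as [|y l]; [left; reflexivity|]. right.
    simpl. rewrite last_snoc. simpl in Hw. apply He. tauto.
Qed.

Lemma is_path_rev {V} (e : V -> V -> Prop) (He : forall x y, e x y -> e y x) l x y :
  is_path e l x y -> is_path e (rev l) y x.
Proof.
  intros [[t ->] [Hl [Hw Hnd]]].
  split; [|split; [|split]].
  - destruct (snoc_decomp t) as [->|[t' [a ->]]].
    + simpl in *. subst. exists []. reflexivity.
    + replace (last (x :: t' ++ [a]) x) with a in Hl
        by (change (x :: t' ++ [a]) with ((x :: t') ++ [a]); rewrite last_snoc; reflexivity).
      subst y. change (x :: t' ++ [a]) with ((x :: t') ++ [a]). rewrite rev_app_distr.
      simpl. eexists; reflexivity.
  - simpl. rewrite last_snoc. reflexivity.
  - apply walk_rev; auto.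
  - apply NoDup_rev; auto.
Qed.


Lemma sub_not_le (K V : Type) (R W : V -> Prop) :
  (forall x, R x -> W x) -> ~ card_le K {x | W x} -> ~ card_le K {x | R x}.
Proof.
  intros HRW H [g ginj]. apply H.
  exists (fun k => exist _ (proj1_sig (g k)) (HRW _ (proj2_sig (g k)))).
  intros a b E. apply ginj. apply eq_sig_hprop; [intros; apply proof_irrelevance|].
  exact (f_equal (@proj1_sig _ _) E).
Qed.

Lemma fan (K : Type) (G : graph) (HK : infinite_card K) (Hc : k_connected G K)
  (A : K -> Prop) (HA : ~ card_le K {k | A k}) (F0 : K -> K -> list G) (t : K -> G) (v : G) :
  (forall i, A i -> In (t i) (F0 i i)) ->
  (forall i j, A i -> A j -> ~ In v (F0 i j)) ->
  exists Q : K -> list G,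
    (forall i, A i -> is_path (adj G) (Q i) v (t i) /\
        forall x, In x (interior (Q i)) -> forall i' j', A i' -> A j' -> ~ In x (F0 i' j')) /\
    (forall i j, A i -> A j -> i <> j -> forall x, In x (interior (Q i)) -> ~ In x (interior (Q j))).
Proof.
  intros Ht Hv.
  set (PF := fun T : K * list G -> Prop =>
    (forall i l l', T (i,l) -> T (i,l') -> l = l') /\
    (forall i l, T (i,l) -> A i /\ is_path (adj G) l v (t i) /\
        (forall x, In x (interior l) -> forall i' j', A i' -> A j' -> ~ In x (F0 i' j'))) /\
    (forall i j l l', T (i,l) -> T (j,l') -> i <> j ->
        forall x, In x (interior l) -> ~ In x (interior l'))).
  destruct (ZornW.zorn_max _ PF) as [M [[M1 [M2 M3]] HM]].
  { intros F FP Ftot. split; [|split].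
    - intros i l l' H1 H2. destruct (chain2 F Ftot _ _ H1 H2) as [X [FX [X1 X2]]].
      exact (proj1 (FP X FX) _ _ _ X1 X2).
    - intros i l [X [FX X1]]. exact (proj1 (proj2 (FP X FX)) _ _ X1).
    - intros i j l l' H1 H2. destruct (chain2 F Ftot _ _ H1 H2) as [X [FX [X1 X2]]].
      exact (proj2 (proj2 (FP X FX)) _ _ _ _ X1 X2). }
  set (Qm := fun i => match excluded_middle_informative (exists l, M (i,l)) with
               | left H => proj1_sig (constructive_indefinite_description _ H)
               | right _ => [] end).
  assert (Qm_spec : forall i l, M (i,l) -> Qm i = l).
  { intros i l Hl. unfold Qm. destruct (excluded_middle_informative (exists l, M (i,l))) as [H|H].
    - apply (M1 i); auto. exact (proj2_sig (constructive_indefinite_description _ H)).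
    - exfalso; eauto. }
  assert (Hall : forall i, A i -> exists l, M (i,l)).
  { intros i0 Ai0. apply NNPP. intro Hno.
    set (R := fun x => (exists i j, A i /\ A j /\ In x (F0 i j ++ Qm i)) /\ x <> v /\ x <> t i0).
    assert (HR : card_lt {x | R x} K).
    { apply lt_of_not_ge. apply (sub_not_le K G R (fun x => exists i j, A i /\ A j /\ In x (F0 i j ++ Qm i))).
      - intros x [H _]. exact H.
      - apply small_union; auto. }
    destruct (Hc R HR) as [_ Hconn].
    destruct (Hconn v (t i0)) as [l [Hl Hlin]].
    { intros [_ [H _]]. auto. }
    { intros [_ [_ H]]. auto. }
    set (N := fun p => M p \/ p = (i0, l)).
    assert (Hint : forall x, In x (interior l) -> ~ exists i j, A i /\ A j /\ In x (F0 i j ++ Qm i)).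
    { intros x Hx Hex. destruct (interior_not_end _ _ _ _ _ Hl Hx) as [n1 n2].
      apply (Hlin x (interior_in _ _ Hx)). split; auto. }
    assert (PN : PF N).
    { split; [|split].
      - intros i l1 l2 [H1|H1] [H2|H2].
        + eauto.
        + injection H2 as -> ->. exfalso; eauto.
        + injection H1 as -> ->. exfalso; eauto.
        + congruence.
      - intros i l1 [H1|H1]; [eauto|]. injection H1 as -> ->. split; [auto|split; [auto|]].
        intros x Hx i' j' Ai' Aj' Hin. apply (Hint x Hx). exists i', j'. split; [|split]; auto.
        apply in_or_app; auto.
      - intros i j l1 l2 H1 H2 Hij x Hx1 Hx2.
        destruct H1 as [H1|H1]; destruct H2 as [H2|H2].
        + exact (M3 _ _ _ _ H1 H2 Hij x Hx1 Hx2).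
        + injection H2 as -> ->. apply (Hint x Hx2). exists i, i.
          destruct (M2 _ _ H1) as [Ai _]. split; [|split]; auto.
          apply in_or_app. right. rewrite (Qm_spec _ _ H1). apply interior_in; auto.
        + injection H1 as -> ->. apply (Hint x Hx1). exists j, j.
          destruct (M2 _ _ H2) as [Aj _]. split; [|split]; auto.
          apply in_or_app. right. rewrite (Qm_spec _ _ H2). apply interior_in; auto.
        + injection H1 as -> ->. injection H2 as -> ->. auto. }
    apply Hno. exists l. apply (HM N); [intros a Ha; left; auto | exact PN | right; reflexivity]. }
  exists Qm. split.
  - intros i Ai. destruct (Hall i Ai) as [l Hl]. rewrite (Qm_spec _ _ Hl).
    destruct (M2 _ _ Hl) as [_ [H1 H2]]. auto.
  - intros i j Ai Aj Hij. destruct (Hall i Ai) as [l Hl]. destruct (Hall j Aj) as [l' Hl'].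
    rewrite (Qm_spec _ _ Hl), (Qm_spec _ _ Hl'). eauto.
Qed.


Section Main.
Variable K : Type.
Variable G : graph.
Hypothesis HK : infinite_card K.
Hypothesis Hc : k_connected G K.

Definition fact := ((K * G) + (K * K * list G))%type.

Definition PO (S : fact -> Prop) :=
  (forall k w w', S (inl (k,w)) -> S (inl (k,w')) -> w = w') /\
  (forall k k' w, S (inl (k,w)) -> S (inl (k',w)) -> k = k') /\
  (forall i j l l', S (inr (i,j,l)) -> S (inr (i,j,l')) -> l = l') /\
  (forall i j l, S (inr (i,j,l)) -> i <> j /\ exists vi vj, S (inl (i,vi)) /\ S (inl (j,vj)) /\
        is_path (adj G) l vi vj) /\
  (forall i j l k w, S (inr (i,j,l)) -> S (inl (k,w)) -> ~ In w (interior l)) /\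
  (forall i j l k m l', S (inr (i,j,l)) -> S (inr (k,m,l')) ->
      ~ ((i = k /\ j = m) \/ (i = m /\ j = k)) ->
      forall x, In x (interior l) -> ~ In x (interior l')) /\
  (forall i j vi vj, S (inl (i,vi)) -> S (inl (j,vj)) -> i <> j -> exists l, S (inr (i,j,l))).

Lemma PO_chain : forall F : (fact -> Prop) -> Prop, (forall X, F X -> PO X) ->
  (forall X Y, F X -> F Y -> (forall a, X a -> Y a) \/ (forall a, Y a -> X a)) ->
  PO (fun a => exists X, F X /\ X a).
Proof.
  intros F FP Ftot.
  split; [|split; [|split; [|split; [|split; [|split]]]]].
  - intros k w w' H1 H2. destruct (chain2 F Ftot _ _ H1 H2) as [X [FX [X1 X2]]].
    destruct (FP X FX) as [P1 _]. eauto.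
  - intros k k' w H1 H2. destruct (chain2 F Ftot _ _ H1 H2) as [X [FX [X1 X2]]].
    destruct (FP X FX) as [_ [P2 _]]. eauto.
  - intros i j l l' H1 H2. destruct (chain2 F Ftot _ _ H1 H2) as [X [FX [X1 X2]]].
    destruct (FP X FX) as [_ [_ [P3 _]]]. eauto.
  - intros i j l [X [FX X1]]. destruct (FP X FX) as [_ [_ [_ [P4 _]]]].
    destruct (P4 _ _ _ X1) as [Hij [vi [vj [H1 [H2 H3]]]]].
    split; auto. exists vi, vj. split; [|split]; eauto.
  - intros i j l k w H1 H2. destruct (chain2 F Ftot _ _ H1 H2) as [X [FX [X1 X2]]].
    destruct (FP X FX) as [_ [_ [_ [_ [P5 _]]]]]. eauto.
  - intros i j l k m l' H1 H2. destruct (chain2 F Ftot _ _ H1 H2) as [X [FX [X1 X2]]].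
    destruct (FP X FX) as [_ [_ [_ [_ [_ [P6 _]]]]]]. eauto.
  - intros i j vi vj H1 H2 Hij. destruct (chain2 F Ftot _ _ H1 H2) as [X [FX [X1 X2]]].
    destruct (FP X FX) as [_ [_ [_ [_ [_ [_ P7]]]]]].
    destruct (P7 _ _ _ _ X1 X2 Hij) as [l Hl]. exists l. eauto.
Qed.

Theorem main_aux : has_TK G K.
Proof.
  destruct (ZornW.zorn_max _ PO PO_chain) as [M [PM HM]].
  destruct PM as [O1 [O2 [O3 [O4 [O5 [O6 O7]]]]]].
  assert (g0 : exists g0 : G, True).
  { destruct (Hc (fun _ => False)) as [[g0 _] _]; [|exists g0; auto].
    apply lt_of_not_ge. intros [g _]. destruct HK as [e _]. exact (proj2_sig (g (e 0))). }
  destruct g0 as [g0 _].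
  set (A := fun k => exists w, M (inl (k,w))).
  set (bf := fun k => match excluded_middle_informative (A k) with
               | left H => proj1_sig (constructive_indefinite_description _ H)
               | right _ => g0 end).
  assert (bf_spec : forall k w, M (inl (k,w)) -> bf k = w).
  { intros k w Hw. unfold bf. destruct (excluded_middle_informative (A k)) as [H|H].
    - apply (O1 k); auto. exact (proj2_sig (constructive_indefinite_description _ H)).
    - exfalso. apply H. exists w. exact Hw. }
  assert (bf_A : forall k, A k -> M (inl (k, bf k))).
  { intros k [w Hw]. rewrite (bf_spec _ _ Hw). exact Hw. }
  set (Pm := fun i j => match excluded_middle_informative (exists l, M (inr (i,j,l))) with
               | left H => proj1_sig (constructive_indefinite_description _ H)
               | right _ => [] end).
  assert (Pm_spec : forall i j l, M (inr (i,j,l)) -> Pm i j = l).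
  { intros i j l Hl. unfold Pm. destruct (excluded_middle_informative (exists l, M (inr (i,j,l)))) as [H|H].
    - apply (O3 i j); auto. exact (proj2_sig (constructive_indefinite_description _ H)).
    - exfalso. apply H. exists l. exact Hl. }
  assert (M4A : forall i j l, M (inr (i,j,l)) -> A i /\ A j /\ i <> j /\ is_path (adj G) l (bf i) (bf j)).
  { intros i j l Hl. destruct (O4 _ _ _ Hl) as [Hij [vi [vj [H1 [H2 H3]]]]].
    rewrite (bf_spec _ _ H1), (bf_spec _ _ H2). split; [exists vi|split; [exists vj|]]; auto. }
  assert (HAK : card_le K {k | A k}).
  { apply NNPP. intro HA.
    assert (Ha : exists a, ~ A a).
    { apply NNPP. intro H. apply HA.

      exists (fun k => exist A k (NNPP (A k) (fun n => H (ex_intro (fun a => ~ A a) k n)))).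
      intros x y E. exact (f_equal (@proj1_sig _ _) E). }
    destruct Ha as [a Ha].
    set (F0 := fun i j => match excluded_middle_informative (i = j) with
                 | left _ => [bf i] | right _ => Pm i j end).
    set (U := fun x => exists i j, A i /\ A j /\ In x (F0 i j)).
    assert (HU : card_lt {x | U x} K) by (apply lt_of_not_ge; apply small_union; auto).
    destruct (Hc U HU) as [[v Hv] _].
    assert (F0ii : forall i, F0 i i = [bf i]).
    { intro i. unfold F0. destruct (excluded_middle_informative (i = i)); [auto|congruence]. }
    assert (UB : forall k, A k -> U (bf k)).
    { intros k Ak. exists k, k. rewrite F0ii. split; [|split]; simpl; auto. }
    assert (UP : forall i j l x, M (inr (i,j,l)) -> In x l -> In x (F0 i j) /\ A i /\ A j).
    { intros i j l x Hl Hx. destruct (M4A _ _ _ Hl) as [Ai [Aj [Hij _]]]. split; auto.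
      unfold F0. destruct (excluded_middle_informative (i = j)); [contradiction|].
      rewrite (Pm_spec _ _ _ Hl). auto. }
    destruct (fan K G HK Hc A HA F0 bf v) as [Q [HQ1 HQ2]].
    { intros i Ai. rewrite F0ii. left; auto. }
    { intros i j Ai Aj Hin. apply Hv. exists i, j. auto. }
    set (NewF := fun f : fact => match f with
       | inl (k,w) => k = a /\ w = v
       | inr (i,j,l) => (i = a /\ A j /\ l = Q j) \/ (j = a /\ A i /\ l = rev (Q i)) end).
    set (N := fun f => M f \/ NewF f).
    assert (newint : forall i j l, NewF (inr (i,j,l)) -> exists c, A c /\
        (forall x, In x (interior l) <-> In x (interior (Q c))) /\
        ((i = a /\ j = c) \/ (i = c /\ j = a))).
    { intros i j l [[-> [Aj ->]]|[-> [Ai ->]]].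
      - exists j. split; [auto|split]; [tauto|left; auto].
      - exists i. split; [auto|split]; [intro x; apply in_interior_rev|right; auto]. }
    assert (MA : forall k w, M (inl (k,w)) -> A k) by (intros k w H; exists w; auto).
    assert (PN : PO N).
    { split; [|split; [|split; [|split; [|split; [|split]]]]].
      - intros k w w' H1 H2. destruct H1 as [H1|H1]; destruct H2 as [H2|H2].
        + eauto.
        + destruct H2 as [-> ->]. exfalso. apply Ha. eauto.
        + destruct H1 as [-> ->]. exfalso. apply Ha. eauto.
        + destruct H1 as [_ ->]. destruct H2 as [_ ->]. auto.
      - intros k k' w H1 H2. destruct H1 as [H1|H1]; destruct H2 as [H2|H2].
        + eauto.
        + destruct H2 as [-> ->]. exfalso. apply Hv. rewrite <- (bf_spec _ _ H1). apply UB. eauto.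
        + destruct H1 as [-> ->]. exfalso. apply Hv. rewrite <- (bf_spec _ _ H2). apply UB. eauto.
        + destruct H1 as [-> _]. destruct H2 as [-> _]. auto.
      - intros i j l l' H1 H2. destruct H1 as [H1|H1]; destruct H2 as [H2|H2].
        + eauto.
        + exfalso. destruct (M4A _ _ _ H1) as [Ai [Aj _]].
          destruct H2 as [[-> _]|[-> _]]; auto.
        + exfalso. destruct (M4A _ _ _ H2) as [Ai [Aj _]].
          destruct H1 as [[-> _]|[-> _]]; auto.
        + destruct H1 as [[-> [Aj ->]]|[-> [Ai ->]]]; destruct H2 as [[E [Aj' ->]]|[E [Ai' ->]]];
            subst; auto; exfalso; auto.
      - intros i j l H. destruct H as [H|H].
        + destruct (O4 _ _ _ H) as [Hij [vi [vj [H1 [H2 H3]]]]].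
          split; auto. exists vi, vj. split; [left|split; [left|]]; auto.
        + destruct H as [[-> [Aj ->]]|[-> [Ai ->]]].
          * split; [intro E; subst; auto|]. exists v, (bf j).
            split; [right; simpl; auto|split; [left; apply bf_A; auto|]]. apply HQ1; auto.
          * split; [intro E; subst; auto|]. exists (bf i), v.
            split; [left; apply bf_A; auto|split; [right; simpl; auto|]].
            apply is_path_rev; [apply adj_sym|]. apply HQ1; auto.
      - intros i j l k w H1 H2. destruct H1 as [H1|H1]; destruct H2 as [H2|H2].
        + eauto.
        + destruct H2 as [-> ->]. intro Hin. apply interior_in in Hin.
          destruct (UP _ _ _ _ H1 Hin) as [H3 [Ai Aj]]. apply Hv. exists i, j. auto.
        + intro Hin. destruct (newint _ _ _ H1) as [c [Ac [Hint _]]]. apply Hint in Hin.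
          destruct (HQ1 c Ac) as [_ Hav]. apply (Hav w Hin k k (MA _ _ H2) (MA _ _ H2)).
          rewrite F0ii. rewrite (bf_spec _ _ H2). left; auto.
        + destruct H2 as [-> ->]. intro Hin. destruct (newint _ _ _ H1) as [c [Ac [Hint _]]].
          apply Hint in Hin. destruct (HQ1 c Ac) as [Hp _].
          destruct (interior_not_end _ _ _ _ _ Hp Hin) as [n1 _]. auto.
      - intros i j l k m l' H1 H2 Hne x Hx1 Hx2.
        destruct H1 as [H1|H1]; destruct H2 as [H2|H2].
        + exact (O6 _ _ _ _ _ _ H1 H2 Hne x Hx1 Hx2).
        + destruct (UP _ _ _ _ H1 (interior_in _ _ Hx1)) as [H3 [Ai Aj]].
          destruct (newint _ _ _ H2) as [c [Ac [Hint _]]]. apply Hint in Hx2.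
          destruct (HQ1 c Ac) as [_ Hav]. exact (Hav x Hx2 i j Ai Aj H3).
        + destruct (UP _ _ _ _ H2 (interior_in _ _ Hx2)) as [H3 [Ai Aj]].
          destruct (newint _ _ _ H1) as [c [Ac [Hint _]]]. apply Hint in Hx1.
          destruct (HQ1 c Ac) as [_ Hav]. exact (Hav x Hx1 k m Ai Aj H3).
        + destruct (newint _ _ _ H1) as [c1 [Ac1 [Hint1 Hp1]]].
          destruct (newint _ _ _ H2) as [c2 [Ac2 [Hint2 Hp2]]].
          apply Hint1 in Hx1. apply Hint2 in Hx2.
          destruct (classic (c1 = c2)) as [<-|Hc12].
          * apply Hne. destruct Hp1 as [[-> ->]|[-> ->]]; destruct Hp2 as [[-> ->]|[-> ->]]; tauto.
          * exact (HQ2 c1 c2 Ac1 Ac2 Hc12 x Hx1 Hx2).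
      - intros i j vi vj H1 H2 Hij. destruct H1 as [H1|H1]; destruct H2 as [H2|H2].
        + destruct (O7 _ _ _ _ H1 H2 Hij) as [l Hl]. exists l. left; auto.
        + destruct H2 as [-> ->]. exists (rev (Q i)). right. simpl. right. split; [auto|split; eauto].
        + destruct H1 as [-> ->]. exists (Q j). right. simpl. left. split; [auto|split; eauto].
        + destruct H1 as [-> _]. destruct H2 as [-> _]. congruence. }
    apply Ha. exists v. apply (HM N); [intros f Hf; left; auto | exact PN | right; simpl; auto]. }
  destruct HAK as [h hinj].
  assert (hinj' : forall i j, proj1_sig (h i) = proj1_sig (h j) -> i = j).
  { intros i j E. apply hinj. apply eq_sig_hprop; [intros; apply proof_irrelevance|auto]. }
  exists (fun i => bf (proj1_sig (h i))), (fun i j => Pm (proj1_sig (h i)) (proj1_sig (h j))).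
  split; [|split].
  - intros i j E. apply hinj'.
    apply (O2 _ _ (bf (proj1_sig (h i)))); [apply bf_A; exact (proj2_sig (h i))|].
    rewrite E. apply bf_A; exact (proj2_sig (h j)).
  - intros i j Hij.
    assert (Hij' : proj1_sig (h i) <> proj1_sig (h j)) by (intro E; apply Hij, hinj'; auto).
    destruct (O7 _ _ _ _ (bf_A _ (proj2_sig (h i))) (bf_A _ (proj2_sig (h j))) Hij') as [l Hl].
    rewrite (Pm_spec _ _ _ Hl). destruct (M4A _ _ _ Hl) as [_ [_ [_ Hp]]].
    split; auto. intro k. exact (O5 _ _ _ _ _ Hl (bf_A _ (proj2_sig (h k)))).
  - intros i j k l Hij Hkl Hne x Hx1 Hx2.
    assert (Hij' : proj1_sig (h i) <> proj1_sig (h j)) by (intro E; apply Hij, hinj'; auto).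
    assert (Hkl' : proj1_sig (h k) <> proj1_sig (h l)) by (intro E; apply Hkl, hinj'; auto).
    destruct (O7 _ _ _ _ (bf_A _ (proj2_sig (h i))) (bf_A _ (proj2_sig (h j))) Hij') as [l1 Hl1].
    destruct (O7 _ _ _ _ (bf_A _ (proj2_sig (h k))) (bf_A _ (proj2_sig (h l))) Hkl') as [l2 Hl2].
    rewrite (Pm_spec _ _ _ Hl1) in Hx1. rewrite (Pm_spec _ _ _ Hl2) in Hx2.
    apply (O6 _ _ _ _ _ _ Hl1 Hl2) with (x := x); auto.
    intros [[E1 E2]|[E1 E2]]; apply Hne; [left|right]; split; apply hinj'; auto.
Qed.
End Main.

Theorem mainTheorem6 (K : Type) (G : graph) :
  infinite_card K -> k_connected G K -> has_TK G K.
Proof.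
  intros HK Hc. exact (main_aux K G HK Hc).
Qed.
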